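(* Let $\kappa\in(0,1)$, $\gamma>0$, and let $S=((x_i,y_i))_{i=1}^n\subset\mathcal{X}\times\{\pm1\}$. Run the boosting procedure with measure rule LB-NxM$(\kappa,\gamma/4)$ (described in the context) and any real-valued weak learner with advantage $\gamma$, for $T\ge 16\log(1/\kappa)/\gamma^2$ rounds, and let $H=\frac1T\sum_{t=1}^T h_t:\mathcal{X}\to[-1,1]$ be the aggregated hypothesis. Then: (Good margin) $\Pr_{(x,y)\sim \mathcal{U}(S)}[yH(x)\le\gamma]\le\kappa$; (Smoothness) every distribution $\hat\mu_t$ supplied to the weak learner satisfies $\hat\mu_t(i)\le \frac{1}{\kappa n}$ for all $i\in[n]$.
   Context: Measures on $[n]$: $\mu:[n]\to[0,1]$, $|\mu|=\sum_i\mu(i)$, density $d(\mu)=|\mu|/n$, induced distribution $\hat\mu(i)=\mu(i)/|\mu|$; $\mathrm{KL}(\mu_1\|\mu_2)=\sum_i\mu_1(i)\log(\mu_1(i)/\mu_2(i))+\mu_2(i)-\mu_1(i)$; $\Gamma_\kappa=\{\mu:d(\mu)\ge\kappa\}$; $\Pi_{\Gamma_\kappa}\tilde\mu=\arg\min_{\mu\in\Gamma_\kappa}\mathrm{KL}(\mu\|\tilde\mu)$. A weak learner with advantage $\gamma$: given $S$ and a distribution $\hat\mu$ on $[n]$, outputs $h:\mathcal{X}\to[-1,1]$ with $\frac12\sum_{j}\hat\mu(j)|h(x_j)-y_j|\le\frac12-\gamma$. LB-NxM$(\kappa,\lambda)$ on input $S$ and hypotheses $h_1,\dots,h_{t}$: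 $\ell_j(i)=1-\frac12|h_j(x_i)-y_i|$, $\tilde\mu_{t+1}(i)=\kappa e^{-\lambda\sum_{j=1}^t\ell_j(i)}$, $\mu_{t+1}=\Pi_{\Gamma_\kappa}\tilde\mu_{t+1}$, return $\hat\mu_{t+1}$. Boosting procedure: starting from the empty list, in each round $t$ compute $\hat\mu_t=$ LB-NxM$(S,(h_1,\dots,h_{t-1}))$, call the weak learner on $(S,\hat\mu_t)$ to get $h_t$, and append it. $\mathcal U(S)$ is the uniform distribution over the $n$ examples. *)

(* Defs.v *)
From mathcomp Require Import all_boot all_order all_algebra.
From mathcomp Require Import reals sequences exp.
Set Implicit Arguments. Unset Strict Implicit. Unset Printing Implicit Defensive.
Import Order.TTheory GRing.Theory Num.Theory.
Local Open Scope ring_scope.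

Section Defs.
Variable R : realType.
Variable n : nat.

Definition is_measure (mu : 'I_n -> R) : Prop := forall i, 0 <= mu i <= 1.

Definition msize (mu : 'I_n -> R) : R := \sum_(i < n) mu i.

Definition density (mu : 'I_n -> R) : R := msize mu / n%:R.

Definition induced (mu : 'I_n -> R) : 'I_n -> R := fun i => mu i / msize mu.

(* KL(mu1 || mu2) = sum_i mu1 i log(mu1 i / mu2 i) + mu2 i - mu1 i
   (with 0 log 0 = 0, which holds literally since 0 * _ = 0). *)
Definition KL (mu1 mu2 : 'I_n -> R) : R :=
  \sum_(i < n) (mu1 i * ln (mu1 i / mu2 i) + mu2 i - mu1 i).

Definition Gamma (kappa : R) (mu : 'I_n -> R) : Prop :=
  is_measure mu /\ kappa <= density mu.

Definition is_KL_projection (kappa : R) (mut mu : 'I_n -> R) : Prop :=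
  Gamma kappa mu /\ forall mu', Gamma kappa mu' -> KL mu mut <= KL mu' mut.

End Defs.

Definition loss (R : realType) (X : Type) (n : nat) (x : 'I_n -> X) (y : 'I_n -> R)
  (h : X -> R) (i : 'I_n) : R := 1 - `|h (x i) - y i| / 2.

(* unprojected measure used in round t (0-based): built from h_0, ..., h_{t-1} *)
Definition LB_tilde (R : realType) (X : Type) (n : nat) (x : 'I_n -> X) (y : 'I_n -> R)
  (kappa lambda : R) (h : nat -> X -> R) (t : nat) : 'I_n -> R :=
  fun i => kappa * expR (- lambda * \sum_(j < t) loss x y (h j) i).

Definition weak_hyp (R : realType) (X : Type) (n : nat) (x : 'I_n -> X) (y : 'I_n -> R)
  (gamma : R) (d : 'I_n -> R) (g : X -> R) : Prop :=
  (forall z, -1 <= g z <= 1) /\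
  (1 / 2) * \sum_(j < n) d j * `|g (x j) - y j| <= 1 / 2 - gamma.

Definition aggregate (R : realType) (X : Type) (h : nat -> X -> R) (T : nat) : X -> R :=
  fun z => (T%:R)^-1 * \sum_(t < T) h t z.

(* Main.v *)
Require Import Defs.
From mathcomp Require Import all_boot all_order all_algebra.
From mathcomp Require Import reals sequences exp.
From mathcomp Require Import ring lra.
Import Order.TTheory GRing.Theory Num.Theory.
Local Open Scope ring_scope.
Set Implicit Arguments. Unset Strict Implicit.

Section Gen.
Variable R : realType.

Lemma ln_le_sub1 (u : R) : 0 < u -> ln u <= u - 1.
Proof.
move=> u0; have := @le_ln1Dx R (u - 1).
have -> : 1 + (u - 1) = u by ring. apply; lra.
Qed.

Lemma kl_pt (a b : R) : 0 <= a -> 0 < b -> a - b <= a * ln (a / b).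
Proof.
move=> a0 b0; have [->|ap] := eqVneq a 0; first by rewrite mul0r; lra.
have apos : 0 < a by rewrite lt_def ap a0.
have h1 := ln_le_sub1 (divr_gt0 b0 apos : 0 < b / a).
have e : ln (a / b) = - ln (b / a).
  by rewrite -lnV ?posrE ?divr_gt0 // invf_div.
rewrite e mulrN.
have : a * ln (b / a) <= a * (b / a - 1) by rewrite ler_pM2l.
rewrite mulrBr mulr1 mulrCA divff ?mulr1 //; lra.
Qed.

Lemma ln_shift (v m a : R) : 0 <= v -> 0 < m ->
  v * ln (v / (m * expR (- a))) = v * ln (v / m) + a * v.
Proof.
move=> v0 m0; have [->|vp] := eqVneq v 0; first by rewrite !mul0r mulr0 addr0.
have vpos : 0 < v by rewrite lt_def vp v0.
rewrite ln_div ?posrE ?mulr_gt0 ?expR_gt0 //.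
rewrite lnM ?posrE ?expR_gt0 // expRK ln_div ?posrE //; ring.
Qed.

Lemma chain_pt (v u m a : R) : 0 <= v -> 0 < u -> 0 < m ->
  0 <= v * ln (v / m) - v * ln (u / m) + a * v - v + u * expR (- a).
Proof.
move=> v0 u0 m0.
have ue : 0 < u * expR (- a) by rewrite mulr_gt0 ?expR_gt0.
have := kl_pt v0 ue.
have [->|vp] := eqVneq v 0; first by rewrite !mul0r !mulr0; lra.
have vpos : 0 < v by rewrite lt_def vp v0.
rewrite ln_div ?posrE // lnM ?posrE ?expR_gt0 // expRK.
rewrite !ln_div ?posrE //.
move=> H; suff -> : v * (ln v - ln m) - v * (ln u - ln m) + a * v =
   v * (ln v - (ln u + - a)) by lra.
ring.
Qed.

Lemma tangent_pt (a c m : R) : 0 <= a -> 0 < c -> 0 < m ->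
  ln (c / m) * (a - c) <= (a * ln (a / m) - a) - (c * ln (c / m) - c).
Proof.
move=> a0 c0 m0; have := chain_pt 0 a0 c0 m0.
rewrite oppr0 expR0 mulr1 mul0r addr0; lra.
Qed.

End Gen.
Section Gen2.
Variable R : realType.

Lemma ln_ge_1sub (u : R) : 0 < u -> 1 - u^-1 <= ln u.
Proof.
move=> u0; have ui : 0 < u^-1 by rewrite invr_gt0.
have := ln_le_sub1 ui.
rewrite lnV ?posrE //; lra.
Qed.

Lemma pert_pt (mu0 nu m eps : R) : 0 < mu0 -> 0 < m -> 0 <= nu -> 0 < eps ->
  ln ((mu0 + eps / (1 + eps) * (nu - mu0)) / m) * (nu - mu0) <=
  ln (mu0 / m) * (nu - mu0) + eps * ((nu - mu0) ^+ 2 / mu0).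
Proof.
move=> mu0p mp nup ep; set s := eps / (1 + eps).
have s0 : 0 < s by rewrite /s divr_gt0 //; lra.
have s1 : s * (1 + eps) = eps by rewrite /s mulfVK //; lra.
set d := nu - mu0; set ms := mu0 + s * d.
have msp : 0 < ms.
  rewrite /ms /d; have : s < 1.
    by rewrite /s ltr_pdivrMr; lra.
  move=> s1'; nra.
have -> : ln (ms / m) = ln (mu0 / m) + ln (ms / mu0).
  by rewrite !ln_div ?posrE //; ring.
rewrite mulrDl lerD2l.
set r := ln (ms / mu0).
rewrite mulrA ler_pdivlMr //.
have [d0|d0] := lerP 0 d.
  have : r <= ms / mu0 - 1 by apply: ln_le_sub1; rewrite divr_gt0.
  rewrite lerBrDr ler_pdivlMr // => H.
  have e1 : mu0 * r <= s * d by rewrite /ms in H; nra.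
  have e2 : s <= eps by nra.
  nra.
have : 1 - (ms / mu0)^-1 <= r by apply: ln_ge_1sub; rewrite divr_gt0.
rewrite invf_div => H.
have H' : ms - mu0 <= ms * r.
  have : ms * (1 - mu0 / ms) <= ms * r by rewrite ler_pM2l.
  by rewrite mulrBr mulr1 mulrCA divff ?mulr1 // gt_eqF.
have e1 : s * d <= ms * r by move: H'; rewrite /ms; lra.
have e2 : d * (ms * r) <= s * d ^+ 2 by nra.
have e3 : s * mu0 <= eps * ms.
  have e4 : eps * ms - s * mu0 = s * eps * nu.
    rewrite /ms /d; have /= e5 := congr1 (fun z => z * mu0) s1.
    transitivity (eps * mu0 - s * (1 + eps) * mu0 + s * eps * nu); first ring.
    by rewrite e5; ring.
  have : 0 <= s * eps * nu by apply: mulr_ge0 => //; apply: mulr_ge0; apply: ltW.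
  lra.
nra.
Qed.

End Gen2.

Section Gen3.
Variable R : realType.

Lemma eps_arg (A C : R) : 0 <= C -> (forall eps, 0 < eps -> 0 <= A + eps * C) -> 0 <= A.
Proof.
move=> C0 H; rewrite leNgt; apply/negP => A0.
have ep : 0 < - A / (2 * (C + 1)) by rewrite divr_gt0; lra.
have := H _ ep.
have -> : A + - A / (2 * (C + 1)) * C = A * ((C + 2) / (2 * (C + 1))).
  by field; lra.
rewrite pmulr_lge0; first lra.
by rewrite divr_gt0; lra.
Qed.

Lemma exp_bound (a L : R) : 0 <= a -> a <= L -> a / (1 + L) <= 1 - expR (- a).
Proof.
move=> a0 aL; rewrite ler_pdivrMr; last lra.
have e := expR_ge1Dx a.
have ep := expR_gt0 a.
have : (1 + a) * expR (- a) <= 1.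
  rewrite expRN ler_pdivrMr //; lra.
have : 0 <= expR (- a) by exact: expR_ge0.
nra.
Qed.

End Gen3.

Section Gen4.
Variable R : realType.
Lemma final_arith (g Lk Tr : R) : 0 < g -> g <= 1/2 -> 0 < Lk -> 16 * Lk <= Tr * g ^+ 2 ->
  0 <= Tr -> Tr * (g / 4 / (1 + g / 4)) * (1/2 + g) <= Lk + g / 4 * Tr * (1 + g) / 2 -> False.
Proof.
move=> g0 g1 L0 hT Tr0 H.
have p : 0 < 1 + g / 4 by lra.
have H2 : Tr * (g / 4) * (1/2 + g) <= (1 + g / 4) * (Lk + g / 4 * Tr * (1 + g) / 2).
  have -> : Tr * (g / 4) * (1/2 + g) = (1 + g / 4) * (Tr * (g / 4 / (1 + g / 4)) * (1/2 + g)).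
    by field; lra.
  by rewrite ler_pM2l.
have A : Tr * g ^+ 2 * (3 - g) / 32 <= (1 + g / 4) * Lk.
  move: H2; set u := (1 + g / 4) * (Lk + g / 4 * Tr * (1 + g) / 2).
  have -> : u = (1 + g / 4) * Lk + (1 + g / 4) * (g / 4 * Tr * (1 + g) / 2) by rewrite /u mulrDr.
  move=> H2; suff E : Tr * (g / 4) * (1/2 + g) - (1 + g / 4) * (g / 4 * Tr * (1 + g) / 2)
      = Tr * g ^+ 2 * (3 - g) / 32 by lra.
  field; by rewrite ?pnatr_eq0.
have B : 5 / 64 * (Tr * g ^+ 2) <= Tr * g ^+ 2 * (3 - g) / 32.
  have : 0 <= Tr * g ^+ 2 by rewrite mulr_ge0 // sqr_ge0.
  nra.
have C : g * Lk <= 1/2 * Lk by rewrite ler_wpM2r // ltW.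
have D : (1 + g / 4) * Lk = Lk + (g * Lk) / 4 by ring.
have E : Tr * g ^+ 2 * (3 - g) / 32 = Tr * g ^+ 2 * (3 - g) / 32 by [].
lra.
Qed.
End Gen4.
Section Main.
Variables (R : realType) (X : Type) (n : nat)
  (x : 'I_n -> X) (y : 'I_n -> R) (kappa gamma : R) (T : nat)
  (h : nat -> X -> R) (mu : nat -> 'I_n -> R).
Hypothesis hn : (0 < n)%N.
Hypothesis hk : 0 < kappa < 1.
Hypothesis hg : 0 < gamma.
Hypothesis hy : forall i, y i = 1 \/ y i = -1.
Hypothesis hproj : forall t, (t < T)%N ->
     is_KL_projection kappa (LB_tilde x y kappa (gamma / 4) h t) (mu t).
Hypothesis hweak : forall t, (t < T)%N -> weak_hyp x y gamma (induced (mu t)) (h t).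

Let lam := gamma / 4.
Let m t := LB_tilde x y kappa lam h t.
Let l t i := loss x y (h t) i.

Definition Gf (v w : 'I_n -> R) := \sum_i (v i * ln (v i / w i) - v i).

Lemma KL_Gf (v w : 'I_n -> R) : KL v w = Gf v w + \sum_i w i.
Proof. rewrite /KL /Gf -big_split; by apply: eq_bigr => i _; rewrite addrAC. Qed.

Lemma hn' : 0 < n%:R :> R. Proof. by rewrite ltr0n. Qed.

Lemma GammaE (v : 'I_n -> R) : Gamma kappa v <-> is_measure v /\ kappa * n%:R <= msize v.
Proof.
rewrite /Gamma /density ler_pdivlMr //; exact: hn'.
Qed.

Lemma loss_eq t i : (t < T)%N -> l t i = (1 + y i * h t (x i)) / 2.
Proof.
move=> tT; have [hb _] := hweak tT; have /andP[h1 h2] := hb (x i).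
rewrite /l /loss; case: (hy i) => ->.
  rewrite ler0_norm; first by field. lra.
rewrite opprK ger0_norm; first by field. lra.
Qed.

Lemma loss_ge0 t i : (t < T)%N -> 0 <= l t i <= 1.
Proof.
move=> tT; rewrite loss_eq //; have [hb _] := hweak tT; have /andP[h1 h2] := hb (x i).
case: (hy i) => ->; apply/andP; split; lra.
Qed.

Lemma lam_gt0 : 0 < lam.
Proof. by rewrite /lam divr_gt0. Qed.

Lemma m_pos t i : 0 < m t i.
Proof. by rewrite /m /LB_tilde mulr_gt0 ?expR_gt0 //; case/andP: hk. Qed.

Lemma m_le t i : (t <= T)%N -> m t i <= kappa.
Proof.
move=> tT; rewrite /m /LB_tilde; case/andP: hk => k0 k1.
rewrite -[leRHS]mulr1 ler_pM2l // expR_le1 mulNr oppr_le0.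
rewrite mulr_ge0 //; first exact: ltW lam_gt0.
apply: sumr_ge0 => j _; have /andP[] := @loss_ge0 j i (leq_trans (ltn_ord j) tT) => //.
Qed.

Lemma m_succ t i : m t.+1 i = m t i * expR (- (lam * l t i)).
Proof.
rewrite /m /LB_tilde big_ord_recr /= -mulrA -expRD; congr (_ * expR _).
rewrite /l; ring.
Qed.


Lemma proj_min t : (t < T)%N ->
  Gamma kappa (mu t) /\ forall v, Gamma kappa v -> Gf (mu t) (m t) <= Gf v (m t).
Proof.
move=> tT; have [G H] := hproj tT; split => // v Gv.
have := H v Gv; rewrite !KL_Gf; lra.
Qed.

Lemma msizeE (v : 'I_n -> R) : msize v = \sum_i v i. Proof. by []. Qed.

Lemma conv (v w : 'I_n -> R) s : Gamma kappa v -> Gamma kappa w -> 0 <= s <= 1 ->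
  Gamma kappa (fun i => w i + s * (v i - w i)).
Proof.
move=> /GammaE [mv sv] /GammaE [mw sw] /andP [s0 s1]; apply/GammaE; split.
  move=> i; have /andP[a1 a2] := mv i; have /andP[b1 b2] := mw i.
  apply/andP; split; nra.
rewrite msizeE big_split /= -mulr_sumr sumrB -!msizeE; nra.
Qed.

Lemma foc_s t (v : 'I_n -> R) s : (t < T)%N -> Gamma kappa v -> 0 < s -> s <= 1 ->
  (forall i, 0 < mu t i + s * (v i - mu t i)) ->
  0 <= \sum_i ln ((mu t i + s * (v i - mu t i)) / m t i) * (v i - mu t i).
Proof.
move=> tT Gv s0 s1 mspos.
have [Gm Hmin] := proj_min tT.
have Gs : Gamma kappa (fun i => mu t i + s * (v i - mu t i)).
  by apply: conv => //; apply/andP; split => //; exact: ltW.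
have H1 := Hmin _ Gs.
have H2 : \sum_i ln ((mu t i + s * (v i - mu t i)) / m t i) *
              (mu t i - (mu t i + s * (v i - mu t i))) <=
          Gf (mu t) (m t) - Gf (fun i => mu t i + s * (v i - mu t i)) (m t).
  rewrite /Gf -sumrB; apply: ler_sum => i _.
  apply: tangent_pt => //; last exact: m_pos.
  by have [mm _] := Gm; have /andP[] := mm i.
have H3 : \sum_i ln ((mu t i + s * (v i - mu t i)) / m t i) *
              (mu t i - (mu t i + s * (v i - mu t i))) =
          - s * \sum_i ln ((mu t i + s * (v i - mu t i)) / m t i) * (v i - mu t i).
  rewrite mulr_sumr; apply: eq_bigr => i _; ring.
rewrite H3 in H2.
have H4 : - s * \sum_i ln ((mu t i + s * (v i - mu t i)) / m t i) * (v i - mu t i) <= 0.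
  by apply: le_trans H2 _; rewrite subr_le0.
move: H4; rewrite mulNr oppr_le0 pmulr_rge0 //.
Qed.

Lemma Gamma1 : Gamma kappa (fun _ : 'I_n => 1).
Proof.
apply/GammaE; split; first by move=> i; rewrite ler01 lexx.
rewrite msizeE sumr_const card_ord.
have := hn'; case/andP: hk => k0 k1; nra.
Qed.

Lemma mu_pos t i : (t < T)%N -> 0 < mu t i.
Proof.
move=> tT; have [[mm _] _] := proj_min tT.
have /andP[mi0 mi1] := mm i.
rewrite lt_def mi0 andbT; apply/negP => /eqP mi.
set C := \sum_j ln ((m t j)^-1).
set s := expR (- C - 1).
have Cge : forall j, 0 <= ln ((m t j)^-1).
  move=> j; apply: ln_ge0; rewrite -invr1 lef_pV2 ?posrE ?m_pos //.
  apply: le_trans (m_le _ (ltnW tT)) _; case/andP: hk => _ /ltW //.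
have C0 : 0 <= C by apply: sumr_ge0 => j _.
have s0 : 0 < s by exact: expR_gt0.
have s1 : s <= 1 by rewrite /s expR_le1; lra.
have msp : forall j, s <= mu t j + s * (1 - mu t j).
  move=> j; have /andP[a1 a2] := mm j; nra.
have := @foc_s t (fun _ => 1) s tT Gamma1 s0 s1 (fun j => lt_le_trans s0 (msp j)).
rewrite (bigD1 i) //= mi subr0 !mulr1 add0r.
have -> : ln (s / m t i) = ln s + ln ((m t i)^-1).
  by rewrite lnM ?posrE ?invr_gt0 ?m_pos.
have Hr : \sum_(j | j != i) ln ((mu t j + s * (1 - mu t j)) / m t j) * (1 - mu t j)
          <= \sum_(j | j != i) ln ((m t j)^-1).
  apply: ler_sum => j _; have /andP[a1 a2] := mm j.
  have H1 : ln ((mu t j + s * (1 - mu t j)) / m t j) <= ln ((m t j)^-1).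
    rewrite ler_ln ?posrE ?divr_gt0 ?invr_gt0 ?m_pos //; last exact: lt_le_trans s0 (msp j).
    rewrite ler_pdivrMr ?m_pos // mulVf ?gt_eqF ?m_pos //; nra.
  have := Cge j; nra.
have HC : C = ln ((m t i)^-1) + \sum_(j | j != i) ln ((m t j)^-1) by rewrite /C (bigD1 i).
have Hs : ln s = - C - 1 by rewrite /s expRK.
lra.
Qed.

Lemma foc t (v : 'I_n -> R) : (t < T)%N -> Gamma kappa v ->
  0 <= \sum_i ln (mu t i / m t i) * (v i - mu t i).
Proof.
move=> tT Gv; have [mv _] := Gv.
apply: (@eps_arg _ _ (\sum_i (v i - mu t i) ^+ 2 / mu t i)).
  apply: sumr_ge0 => i _; apply: divr_ge0; first exact: sqr_ge0.
  exact: ltW (mu_pos i tT).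
move=> eps ep.
have s0 : 0 < eps / (1 + eps) by rewrite divr_gt0 //; lra.
have s1 : eps / (1 + eps) < 1 by rewrite ltr_pdivrMr; lra.
have msp : forall i, 0 < mu t i + eps / (1 + eps) * (v i - mu t i).
  move=> i; have := mu_pos i tT; have /andP[a1 a2] := mv i; nra.
have := foc_s tT Gv s0 (ltW s1) msp.
move=> H; apply: le_trans H _.
rewrite mulr_sumr -big_split; apply: ler_sum => i _ /=.
apply: pert_pt => //; first exact: mu_pos.
  exact: m_pos.
by have /andP[] := mv i.
Qed.

Definition Dt t := \sum_i mu t i * (1 - expR (- (lam * l t i))).

Lemma chain t (v : 'I_n -> R) : (t < T)%N -> Gamma kappa v ->
  Gf (mu t) (m t) + Dt t <= Gf v (m t.+1).
Proof.
move=> tT Gv; have [mv _] := Gv.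
have F := foc tT Gv.
have Hs : Gf v (m t.+1) - Gf (mu t) (m t) - Dt t - \sum_i ln (mu t i / m t i) * (v i - mu t i)
  = \sum_i (v i * ln (v i / m t i) - v i * ln (mu t i / m t i) + (lam * l t i) * v i - v i
             + mu t i * expR (- (lam * l t i))).
  rewrite /Gf /Dt -!sumrB; apply: eq_bigr => i _.
  rewrite m_succ ln_shift; last exact: m_pos.
    ring.
  by have /andP[] := mv i.
have H0 : 0 <= \sum_i (v i * ln (v i / m t i) - v i * ln (mu t i / m t i) + (lam * l t i) * v i - v i
             + mu t i * expR (- (lam * l t i))).
  apply: sumr_ge0 => i _; apply: chain_pt; last exact: m_pos.
    by have /andP[] := mv i.
  exact: mu_pos.
lra.
Qed.

Lemma tele k : (k < T)%N -> forall v, Gamma kappa v ->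
  Gf (mu 0) (m 0) + \sum_(t < k.+1) Dt t <= Gf v (m k.+1).
Proof.
elim: k => [|k IH] kT v Gv.
  by rewrite big_ord1; exact: chain.
rewrite big_ord_recr /= addrA.
apply: le_trans (chain kT Gv).
rewrite lerD2r; apply: IH; first exact: ltnW.
by have [] := proj_min kT.
Qed.

Lemma Q0_bound : (0 < T)%N -> - (kappa * n%:R) <= Gf (mu 0) (m 0).
Proof.
move=> T0; have [[mm _] _] := proj_min T0.
have m0 : forall i, m 0 i = kappa.
  by move=> i; rewrite /m /LB_tilde big_ord0 mulr0 expR0 mulr1.
rewrite /Gf; apply: le_trans (_ : \sum_(i < n) (- kappa) <= _).
  by rewrite sumr_const card_ord mulNrn mulr_natr.
apply: ler_sum => i _; rewrite m0.
have /andP[a1 _] := mm i; have := kl_pt a1 (proj1 (andP hk)); lra.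
Qed.

Lemma msize_pos t : (t < T)%N -> kappa * n%:R <= msize (mu t) /\ 0 < msize (mu t).
Proof.
move=> tT; have [/GammaE[_ H] _] := proj_min tT; split => //.
apply: lt_le_trans H; rewrite mulr_gt0 //; [by case/andP: hk | exact: hn'].
Qed.

Lemma D_bound t : (t < T)%N ->
  lam / (1 + lam) * (kappa * n%:R) * (1/2 + gamma) <= Dt t.
Proof.
move=> tT; have [ms1 ms0] := msize_pos tT.
have [_ W] := hweak tT.
set a := fun i => `|h t (x i) - y i|.
have E1 : \sum_j induced (mu t) j * `|h t (x j) - y j| = (\sum_j mu t j * a j) / msize (mu t).
  rewrite mulr_suml; apply: eq_bigr => j _; rewrite /induced /a; ring.
rewrite E1 in W.
have E2 : \sum_i mu t i * l t i = msize (mu t) - (1/2) * \sum_j mu t j * a j.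
  rewrite msizeE mulr_sumr -sumrB; apply: eq_bigr => i _; rewrite /l /loss /a; ring.
have W2 : (1/2) * \sum_j mu t j * a j <= msize (mu t) * (1/2 - gamma).
  by move: W; rewrite mulrA ler_pdivrMr // mulrC [_ * msize _]mulrC.
have L1 : msize (mu t) * (1/2 + gamma) <= \sum_i mu t i * l t i by rewrite E2; move: W2; rewrite !mulrDr; lra.
have L2 : lam / (1 + lam) * \sum_i mu t i * l t i <= Dt t.
  rewrite mulr_sumr /Dt; apply: ler_sum => i _.
  have /andP[l0 l1] := loss_ge0 i tT.
  have mi := mu_pos i tT.
  have lp := lam_gt0.
  have la : lam * l t i <= lam by nra.
  have := @exp_bound _ (lam * l t i) lam (mulr_ge0 (ltW lp) l0) la.
  move=> H.
  have -> : lam / (1 + lam) * (mu t i * l t i) = mu t i * (lam * l t i / (1 + lam)) by ring.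
  by rewrite ler_wpM2l // ltW.
have lp := lam_gt0.
have c0 : 0 <= lam / (1 + lam) by rewrite divr_ge0 //; lra.
apply: le_trans L2; rewrite -mulrA ler_wpM2l //.
apply: le_trans L1; apply: ler_wpM2r => //.
by rewrite addr_ge0 ?divr_ge0 // ltW.
Qed.

Lemma smooth t i : (t < T)%N -> induced (mu t) i <= (kappa * n%:R)^-1.
Proof.
move=> tT; have [ms1 ms0] := msize_pos tT.
have [[mm _] _] := proj_min tT; have /andP[a0 a1] := mm i.
have P0 : 0 < kappa * n%:R by rewrite mulr_gt0 //; [case/andP: hk | exact: hn'].
rewrite /induced; apply: le_trans (_ : 1 / msize (mu t) <= _).
  by rewrite ler_pM2r ?invr_gt0.
by rewrite div1r lef_pV2 ?posrE.
Qed.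

Lemma gamma_le : (0 < T)%N -> gamma <= 1/2.
Proof.
move=> T0; have [_ W] := hweak T0; have [_ ms0] := msize_pos T0.
have [[mm _] _] := proj_min T0.
have : 0 <= 1/2 * \sum_j induced (mu 0) j * `|h 0%N (x j) - y j|.
  apply: mulr_ge0; first by rewrite divr_ge0.
  apply: sumr_ge0 => j _; apply: mulr_ge0 => //.
  by rewrite /induced divr_ge0 //; [have /andP[] := mm j | exact: ltW].
lra.
Qed.

Lemma margin : 16 * ln (kappa^-1) / gamma ^+ 2 <= T%:R ->
  #|[set i : 'I_n | y i * aggregate h T (x i) <= gamma]|%:R / n%:R <= kappa.
Proof.
move=> hT.
set M := [set i : 'I_n | y i * aggregate h T (x i) <= gamma].
case/andP: hk => k0 k1.
set Lk := ln (kappa^-1).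
have Lk0 : 0 < Lk by rewrite /Lk ln_gt0 // invf_gt1.
have g2 : 0 < gamma ^+ 2 by rewrite exprn_gt0.
have hT' : 16 * Lk <= T%:R * gamma ^+ 2 by rewrite -ler_pdivrMr.
have T0 : (0 < T)%N.
  rewrite lt0n; apply/negP => /eqP T0; move: hT'; rewrite T0 mul0r; lra.
have g12 := gamma_le T0.
have P0 : 0 < kappa * n%:R by rewrite mulr_gt0 //; exact: hn'.
rewrite ler_pdivrMr; last exact: hn'.
rewrite leNgt; apply/negP => HM.
set P := kappa * n%:R in P0 HM.
set Mc := #|M|%:R in HM.
have Mc0 : 0 < Mc by apply: lt_trans HM.
set al := P / Mc.
have al0 : 0 < al by rewrite divr_gt0.
have al1 : al <= 1 by rewrite ler_pdivrMr // mul1r ltW.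
set v := fun i => if i \in M then al else 0.
have msv : msize v = P.
  rewrite msizeE /v -big_mkcond /= sumr_const.
  by rewrite -mulr_natr /al divfK // gt_eqF.
have Gv : Gamma kappa v.
  apply/GammaE; split; last by rewrite msv.
  by move=> i; rewrite /v; case: (i \in M) => //; apply/andP; split => //; exact: ltW.
have Tp : (T.-1 < T)%N by rewrite ltn_predL.
have Ht := @tele T.-1 Tp v Gv.
rewrite prednK // in Ht.
have HQ := Q0_bound T0.
have HD : T%:R * (lam / (1 + lam) * P * (1/2 + gamma)) <= \sum_(t < T) Dt t.
  have -> : T%:R * (lam / (1 + lam) * P * (1/2 + gamma)) =
     \sum_(t < T) (lam / (1 + lam) * P * (1/2 + gamma)) by rewrite sumr_const card_ord mulr_natl.
  apply: ler_sum => t _.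
  exact: D_bound.
set K := Lk + lam * T%:R * (1 + gamma) / 2 - 1.
have HG : Gf v (m T) <= K * P.
  rewrite -msv msizeE mulr_sumr /Gf; apply: ler_sum => i _.
  rewrite /v; case: ifP => iM; last by rewrite !mul0r subr0 mulr0.
  rewrite inE in iM.
  have Li : \sum_(j < T) loss x y (h j) i <= T%:R * (1 + gamma) / 2.
    have -> : \sum_(j < T) loss x y (h j) i = \sum_(j < T) (1 + y i * h j (x i)) / 2.
      by apply: eq_bigr => j _; exact: (loss_eq i (ltn_ord j)).
    rewrite -mulr_suml big_split sumr_const card_ord -mulr_sumr /=.
    have T0' : 0 < T%:R :> R by rewrite ltr0n.
    have : y i * \sum_(j < T) h j (x i) = T%:R * (y i * aggregate h T (x i)).
      by rewrite /aggregate mulrCA mulVKf // gt_eqF.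
    move=> E; rewrite E.
    have : T%:R * (y i * aggregate h T (x i)) <= T%:R * gamma by rewrite ler_pM2l.
    rewrite -mulr_natr; lra.
  have lnm : ln (m T i) = - Lk - lam * \sum_(j < T) loss x y (h j) i.
    rewrite /m /LB_tilde lnM ?posrE ?expR_gt0 // expRK /Lk lnV ?posrE //; ring.
  have lnal : ln al <= 0 by exact: ln_le0.
  have : ln (al / m T i) <= K + 1.
    rewrite ln_div ?posrE ?m_pos // lnm /K.
    have := lam_gt0; nra.
  nra.
have H1 : P * (T%:R * (lam / (1 + lam)) * (1/2 + gamma) - (Lk + lam * T%:R * (1 + gamma) / 2)) <= 0.
  have E : P * (T%:R * (lam / (1 + lam)) * (1/2 + gamma) - (Lk + lam * T%:R * (1 + gamma) / 2))
     = T%:R * (lam / (1 + lam) * P * (1/2 + gamma)) - P - K * P by rewrite /K; ring.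
  have HQ' : - P <= Gf (mu 0) (m 0) := HQ.
  rewrite E; lra.
have H2 : T%:R * (lam / (1 + lam)) * (1/2 + gamma) <= Lk + lam * T%:R * (1 + gamma) / 2.
  by move: H1; rewrite pmulr_rle0 // subr_le0.
by apply: (@final_arith _ gamma Lk T%:R).
Qed.

End Main.

Theorem mainTheorem3 (R : realType) (X : Type) (n : nat)
  (x : 'I_n -> X) (y : 'I_n -> R) (kappa gamma : R) (T : nat)
  (h : nat -> X -> R) (mu : nat -> 'I_n -> R) :
  (0 < n)%N ->
  0 < kappa < 1 -> 0 < gamma ->
  (forall i, y i = 1 \/ y i = -1) ->
  16 * ln (kappa^-1) / gamma ^+ 2 <= T%:R ->
  (* round t (0-based, t < T): mu t = LB-NxM(kappa, gamma/4) on h_0..h_{t-1} *)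
  (forall t, (t < T)%N ->
     is_KL_projection kappa (LB_tilde x y kappa (gamma / 4) h t) (mu t)) ->
  (* the weak learner returns h t with advantage gamma on the induced distribution *)
  (forall t, (t < T)%N -> weak_hyp x y gamma (induced (mu t)) (h t)) ->
  (#|[set i : 'I_n | y i * aggregate h T (x i) <= gamma]|%:R / n%:R <= kappa)
  /\ (forall t, (t < T)%N -> forall i, induced (mu t) i <= (kappa * n%:R)^-1).
Proof.
move=> hn hk hg hy hT hproj hweak; split.
  exact: (margin hn hk hg hy hproj hweak hT).
move=> t tT i; exact: (smooth hn hk hproj i tT).
Qed.
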